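(* Let $q$ be a prime power, $r\ge 1$ an integer, and $\mathcal{S}$ a $q^r$-divisible spanning set of $q^{r+1}$ points in $\mathrm{PG}(v-1,q)$. Let $K$ be a subspace of codimension $2$ (i.e. a $(v-2)$-space) with $|\mathcal{S}\cap K|=kq^{r-1}$ for some integer $0<k<q$. Then every hyperplane $H$ containing $K$ satisfies $|\mathcal{S}\cap H|\le kq^r$.
   Context: $\mathrm{PG}(v-1,q)$ is the projective space of $\mathbb{F}_q^v$; a $k$-space is a $k$-dimensional subspace of $\mathbb{F}_q^v$ (points are $1$-spaces, hyperplanes $(v-1)$-spaces). A set $\mathcal{S}$ of points is spanning if its points span $\mathbb{F}_q^v$, and it is $q^r$-divisible if $|\mathcal{S}\cap H|\equiv|\mathcal{S}|\pmod{q^r}$ for every hyperplane $H$. *)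

(* Defs.v *)
From HB Require Import structures.
From mathcomp Require Import all_boot all_order all_algebra all_field.
Set Implicit Arguments. Unset Strict Implicit. Unset Printing Implicit Defensive.
Import GRing.Theory.

(* Subspaces of F^v are represented by (row spaces of) square matrices
   'M[F]_v, using mxalgebra. A point (1-space) is represented canonically by
   a rank-1 matrix P with <<P>> = P, so distinct points are distinct matrices. *)
Section PG.
Variables (F : finFieldType) (v : nat).

Definition is_point (P : 'M[F]_v) : bool := (\rank P == 1%N) && (<<P>>%MS == P).

Definition pts_in (S : {set 'M[F]_v}) (U : 'M[F]_v) : {set 'M[F]_v} :=
  [set P in S | (P <= U)%MS].

Definition point_set (S : {set 'M[F]_v}) : Prop := forall P, P \in S -> is_point P.

Definition spanning (S : {set 'M[F]_v}) : Prop :=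
  \rank (\sum_(P in S) P)%MS = v.

Definition divisible (m : nat) (S : {set 'M[F]_v}) : Prop :=
  forall H : 'M[F]_v, \rank H = v.-1 -> #|pts_in S H| = #|S| %[mod m].
End PG.

(* Main.v *)
Require Import Defs.
From mathcomp Require Import all_boot all_order all_algebra all_field.
From mathcomp Require Import zify.
Set Implicit Arguments. Unset Strict Implicit. Unset Printing Implicit Defensive.
Import GRing.Theory.

Section Aux.
Variable F : fieldType.
Local Open Scope ring_scope.

Lemma strict_rank n m1 m2 (A : 'M[F]_(m1, n)) (x : 'M[F]_(m2, n)) :
  ~~ (x <= A)%MS -> (\rank A < \rank (A + x)%MS)%N.
Proof.
move=> nxA; apply: rank_ltmx; rewrite ltmxE addsmxSl /=.
apply: contra nxA => sA; exact: submx_trans (addsmxSr A x) sA.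
Qed.

Lemma cap_subK n (A B K : 'M[F]_n) :
  (2 <= n)%N -> \rank A = n.-1 -> \rank B = n.-1 -> \rank (A + B)%MS = n ->
  (K <= A)%MS -> (K <= B)%MS -> \rank K = (n - 2)%N -> (A :&: B <= K)%MS.
Proof.
move=> n2 rA rB rAB sKA sKB rK.
have sK : (K <= A :&: B)%MS by rewrite sub_capmx sKA sKB.
have := mxrank_sum_cap A B; rewrite rA rB rAB => e.
rewrite -(mxrank_leqif_sup sK).2 rK; apply/eqP; lia.
Qed.

Lemma exists_row_notin m1 m2 n (A : 'M[F]_(m1, n)) (B : 'M[F]_(m2, n)) :
  (\rank B < \rank A)%N -> exists i, ~~ (row i A <= B)%MS.
Proof.
move=> lt; case: (boolP [exists i, ~~ (row i A <= B)%MS]) => [/existsP//|].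
rewrite negb_exists => /forallP H.
have : (A <= B)%MS by apply/row_subP => i; have := H i; rewrite negbK.
move/mxrankS; rewrite leqNgt lt //.
Qed.


Lemma hyper_facts (v : nat) (K H : 'M[F]_v) :
  (2 <= v)%N -> \rank K = (v - 2)%N -> \rank H = v.-1 -> (K <= H)%MS ->
  exists Hyp : option F -> 'M[F]_v,
    [/\ Hyp None = H,
        forall i, \rank (Hyp i) = v.-1,
        forall i, (K <= Hyp i)%MS &
        forall i j, i != j -> (Hyp i :&: Hyp j <= K)%MS].
Proof.
move=> v2 rK rH sKH.
have [iu nu] : exists i, ~~ (row i H <= K)%MS by apply: exists_row_notin; lia.
move: (row iu H) (row_sub iu H) nu => u uH nu.
have [iw nw] : exists i, ~~ (row i (1%:M : 'M[F]_v) <= H)%MS.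
  by apply: exists_row_notin; rewrite mxrank1; lia.
move: (row iw (1%:M : 'M[F]_v)) nw => w nw.
have HKu : (H <= K + u)%MS.
  have sKu : (K + u <= H)%MS by rewrite addsmx_sub sKH uH.
  rewrite -(mxrank_leqif_sup sKu).2; apply/eqP.
  have := strict_rank nu; have := mxrankS sKu; lia.
have full : forall T : 'M[F]_v, (K <= T)%MS -> (u <= T)%MS -> (w <= T)%MS ->
    \rank T = v.
  move=> T KT uT wT.
  have sHw : (H + w <= T)%MS.
    by rewrite addsmx_sub wT andbT (submx_trans HKu) // addsmx_sub KT uT.
  have := strict_rank nw; have := mxrankS sHw; have := rank_leq_col T; lia.
pose x (c : F) := w + c *: u.
have wx : forall c, w = x c + (- c) *: u by move=> c; rewrite /x scaleNr addrK.
have nx : forall c, ~~ (x c <= K)%MS.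
  move=> c; apply: contra nw => xK.
  rewrite (wx c) addmx_sub // ?scalemx_sub //; exact: submx_trans xK sKH.
pose Hyp (o : option F) : 'M[F]_v := if o is Some c then (K + x c)%MS else H.
exists Hyp; split => //.
- case=> [c|] //=.
  have := strict_rank (nx c); have := mxrank_adds_leqif K (x c).
  move=> [le _]; have := rank_leq_row (x c); lia.
- by case=> [c|] //=; rewrite addsmxSl.
have xH : forall c, (x c <= Hyp (Some c))%MS by move=> c; exact: addsmxSr.
have KHyp : forall o, (K <= Hyp o)%MS by case=> [c|] //=; rewrite addsmxSl.
have rHyp : forall o, \rank (Hyp o) = v.-1.
  case=> [c|] //=.
  have := strict_rank (nx c); have := mxrank_adds_leqif K (x c).
  move=> [le _]; have := rank_leq_row (x c); lia.
have caseNS : forall c (T : 'M[F]_v), (H <= T)%MS -> (Hyp (Some c) <= T)%MS ->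
    \rank T = v.
  move=> c T HT cT; apply: full.
  - exact: submx_trans sKH HT.
  - exact: submx_trans uH HT.
  rewrite (wx c) addmx_sub //; first exact: submx_trans (xH c) cT.
  by rewrite scalemx_sub // (submx_trans uH HT).
move=> i j ij; apply: cap_subK => //.
case: i j ij => [c|] [d|] //= cd.
- have xcS : (x c <= Hyp (Some c) + Hyp (Some d))%MS.
    exact: submx_trans (xH c) (addsmxSl _ _).
  have xdS : (x d <= Hyp (Some c) + Hyp (Some d))%MS.
    exact: submx_trans (xH d) (addsmxSr _ _).
  have uS : (u <= Hyp (Some c) + Hyp (Some d))%MS.
    have -> : u = (c - d)^-1 *: (x c - x d).
      rewrite /x opprD addrACA subrr add0r -scalerBl scalerA mulVf ?scale1r //.
      by rewrite subr_eq0; apply: contraNneq cd => ->.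
    apply: scalemx_sub; apply: addmx_sub => //.
    by rewrite -scaleN1r scalemx_sub.
  apply: full => //.
  + exact: submx_trans (KHyp (Some c)) (addsmxSl _ _).
  + by rewrite (wx c) addmx_sub // scalemx_sub.
- exact: caseNS (addsmxSr _ _) (addsmxSl _ _).
- exact: caseNS (addsmxSl _ _) (addsmxSr _ _).
Qed.
End Aux.
Theorem lemma1 (F : finFieldType) (v r k : nat) (S : {set 'M[F]_v})
  (K : 'M[F]_v) :
  (2 <= v)%N -> (1 <= r)%N ->
  point_set S -> spanning S -> divisible (#|F| ^ r) S ->
  #|S| = (#|F| ^ r.+1)%N ->
  \rank K = (v - 2)%N ->
  (0 < k)%N -> (k < #|F|)%N ->
  #|pts_in S K| = (k * #|F| ^ r.-1)%N ->
  forall H : 'M[F]_v, \rank H = v.-1 -> (K <= H)%MS ->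
    (#|pts_in S H| <= k * #|F| ^ r)%N.
Proof.
move=> v2 r1 _ _ divS cardS rK k0 kq cK H rH KH.
have [Hyp [HN rHyp KHyp capK]] := hyper_facts v2 rK rH KH.
have subK : forall o, pts_in S K \subset pts_in S (Hyp o).
  move=> o; apply/subsetP => P; rewrite !inE => /andP[-> PK] /=.
  exact: submx_trans PK (KHyp o).
pose D o := pts_in S (Hyp o) :\: pts_in S K.
have cD : forall o, #|D o| = (#|pts_in S (Hyp o)| - #|pts_in S K|)%N.
  by move=> o; rewrite cardsD (setIidPr (subK o)).
have disj : forall o1 o2 P, o1 != o2 -> P \in D o1 -> P \in D o2 -> False.
  move=> o1 o2 P ne h1 h2; have [Q1 nK] := setDP h1; have [Q2 _] := setDP h2.
  move: Q1 Q2; rewrite !inE => /andP[PS P1] /andP[_ P2].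
  move/negP: nK; apply; rewrite inE PS /=; apply: submx_trans (capK _ _ ne).
  by rewrite sub_capmx P1 P2.
have cardE' : forall A : {set 'M[F]_v}, #|A| = (\sum_P (P \in A) : nat)%N.
  by move=> A; rewrite -sum1_card big_mkcond.
have sumle : (\sum_o #|D o| <= #|S|)%N.
  rewrite (eq_bigr _ (fun o _ => cardE' (D o))) exchange_big cardE'.
  apply: leq_sum => P _.
  case: (boolP [exists o, P \in D o]) => [/existsP[o Po]|].
    rewrite (bigD1 o) //= Po big1 /=.
      have : P \in S by move: Po; rewrite !inE => /andP[_ /andP[]].
      by move=> ->.
    move=> o' ne; case: (boolP (P \in D o')) => // h.
    by case: (disj o' o P ne h Po).
  rewrite negb_exists => /forallP all0.
  by rewrite big1 // => o _; rewrite (negbTE (all0 o)).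
have q0 : (0 < #|F|)%N by apply/card_gt0P; exists 0%R.
have m0 : (0 < #|pts_in S K|)%N by rewrite cK muln_gt0 k0 expn_gt0 q0.
have dvH : forall o, (#|F| ^ r %| #|pts_in S (Hyp o)|)%N.
  by move=> o; rewrite /dvdn (divS _ (rHyp o)) cardS expnSr modnMr.
have nge : forall o, (#|F| ^ r <= #|pts_in S (Hyp o)|)%N.
  move=> o; apply: dvdn_leq; last exact: dvH.
  exact: leq_trans m0 (subset_leq_card (subK o)).
have [a ea] : exists a, #|pts_in S H| = (a * #|F| ^ r)%N.
  by have /dvdnP := dvH None; rewrite HN.
rewrite (bigD1 None) //= in sumle.
have lb : (#|F| * (#|F| ^ r - #|pts_in S K|) <=
           \sum_(o | o != None) #|D o|)%N.
  have -> : (\sum_(o | o != None) #|D o| = \sum_(o in predC1 None) #|D o|)%N.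
    by apply: eq_bigl.
  have cq : #|predC1 (None : option F)| = #|F| by rewrite cardC1 card_option.
  rewrite -{1}cq -sum_nat_const.
  by apply: leq_sum => o _; rewrite cD leq_sub2r.
move: sumle lb; rewrite cD HN cardS cK ea.
have -> : r = r.-1.+1 by rewrite prednK.
rewrite !expnS /=.
set Q := (#|F| ^ r.-1)%N; set q := #|F|; set n := #|pts_in S H|.
have e1 : (q * (q * Q - k * Q) = q * (q * Q) - k * (q * Q))%N.
  by rewrite mulnBr [(q * (k * Q))%N]mulnCA.
have e2 : (k * Q <= q * Q)%N by rewrite leq_mul2r ltnW ?orbT.
have e3 : (k * (q * Q) <= q * (q * Q))%N by rewrite leq_mul2r ltnW ?orbT.
have e4 : (k * Q <= k * (q * Q))%N by rewrite leq_mul2l leq_pmull ?orbT.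
rewrite e1; move=> h1 h2.
have hl : (a * (q * Q) < k.+1 * (q * Q))%N.
  rewrite mulSn; have : (k * Q < q * Q)%N by rewrite ltn_mul2r kq andbT expn_gt0 q0.
  lia.
rewrite leq_mul2r; apply/orP; right; move: hl; rewrite ltn_mul2r; case/andP=> _; by rewrite ltnS.
Qed.
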